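(* Let $T\in\mathbb{R}^{M\times M}$ be symmetric positive definite, $D\in\mathbb{R}^{M\times M}$ diagonal with nonpositive diagonal entries, and $\omega>0$. Then every eigenvalue of $\mathcal{F}_\omega^{-1}\mathcal{R}$ lies in the closed disk in $\mathbb{C}$ of radius $\sigma(\omega)$ centered at $1$, where $$\sigma(\omega)=\max_{\lambda_i\in\lambda(D)}\left|\frac{\omega+\lambda_i}{\omega-\lambda_i}\right|\cdot\max_{\mu_i\in\lambda(T)}\sqrt{\frac{(\omega-\mu_i)^2+1}{(\omega+\mu_i)^2+1}}<1 .$$
   Context: Let $I$ denote the identity matrix of the appropriate size. Define the $2M\times 2M$ real block matrices $$\mathcal{R}=\begin{bmatrix}T-D & -I\\ I & T-D\end{bmatrix},\quad \mathcal{B}=\begin{bmatrix}-D&0\\0&-D\end{bmatrix},\quad \mathcal{H}=\begin{bmatrix}T&-I\\ I&T\end{bmatrix},$$ and for $\omega>0$, $\mathcal{F}_\omega=\tfrac{1}{2\omega}(\omega I+\mathcal{B})(\omega I+\mathcal{H})$. $\lambda(D)$, $\lambda(T)$ denote the sets of eigenvalues of $D$, $T$. *)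

(* Defs.v *)
From mathcomp Require Import all_boot all_algebra.
From mathcomp Require Import complex.
From mathcomp Require Import classical_sets reals.
Set Implicit Arguments. Unset Strict Implicit. Unset Printing Implicit Defensive.
Import GRing.Theory Num.Theory.
Local Open Scope ring_scope.
Local Open Scope classical_set_scope.

Section Defs.
Variable R : realType.
Variable M : nat.

Definition spd (T : 'M[R]_M) : Prop :=
  T^T = T /\ forall v : 'cV[R]_M, v != 0 -> 0 < (v^T *m T *m v) 0 0.

Definition Rmx (T D : 'M[R]_M) : 'M[R]_(M + M) :=
  block_mx (T - D) (- 1%:M) 1%:M (T - D).
Definition Bmx (D : 'M[R]_M) : 'M[R]_(M + M) :=
  block_mx (- D) 0 0 (- D).
Definition Hmx (T : 'M[R]_M) : 'M[R]_(M + M) :=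
  block_mx T (- 1%:M) 1%:M T.
Definition Fmx (w : R) (T D : 'M[R]_M) : 'M[R]_(M + M) :=
  (2 * w)^-1 *: ((w%:M + Bmx D) *m (w%:M + Hmx T)).

Definition spec (A : 'M[R]_M) : set R := [set a | eigenvalue A a].

(* sigma(omega) = max over lambda(D) * max over lambda(T); maxima over the
   finite sets of eigenvalues are expressed as suprema *)
Definition sigma (w : R) (T D : 'M[R]_M) : R :=
  sup [set `|(w + l) / (w - l)| | l in spec D] *
  sup [set Num.sqrt (((w - m) ^+ 2 + 1) / ((w + m) ^+ 2 + 1)) | m in spec T].

End Defs.

Definition toC (R : realType) (x : R) : R[i] := (x%:C)%C.

(* Main.v *)
Require Import Defs.
From mathcomp Require Import all_boot all_algebra.
From mathcomp Require Import complex.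
From mathcomp Require Import classical_sets reals.
From mathcomp Require Import boolp ring lra order.
Import Order.TTheory GRing.Theory Num.Theory.
Local Open Scope ring_scope.
Set Implicit Arguments. Unset Strict Implicit. Unset Printing Implicit Defensive.

Lemma FR_id (K : fieldType) n (a : K) (B H : 'M[K]_n) : a != 0 -> (2:K) != 0 ->
  (2 * a)^-1 *: ((a%:M + B) *m (a%:M + H)) - (B + H) =
  (2 * a)^-1 *: ((a%:M - B) *m (a%:M - H)).
Proof.
move=> a0 h2.
have E1 : (a%:M + B) *m (a%:M + H) = (a *: a%:M + B *m H) + a *: (B + H).
  rewrite mulmxDl !mulmxDr (addrC (B *m a%:M)) addrACA !mul_scalar_mx mul_mx_scalar.
  by rewrite scalerDr (addrC (a *: B)).
have E2 : (a%:M - B) *m (a%:M - H) = (a *: a%:M + B *m H) - a *: (B + H).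
  rewrite mulmxBl !mulmxBr opprB addrACA !mul_scalar_mx mul_mx_scalar.
  by rewrite scalerDr opprD; congr (_ + _); rewrite addrC.
rewrite E1 E2 scalerDr scalerBr !scalerA -addrA; congr (_ + _).
rewrite -scaleNr -{2}[B + H]scale1r -scalerBl; congr (_ *: _); field.
by rewrite a0 h2.
Qed.

Lemma unit_of_ker (K : fieldType) n (A : 'M[K]_n) :
  (forall v : 'rV[K]_n, v *m A = 0 -> v = 0) -> A \in unitmx.
Proof.
move=> H; rewrite -row_free_unit -kermx_eq0; apply/eqP/row_matrixP => i.
by rewrite row0; apply: H; rewrite -row_mul mulmx_ker row0.
Qed.

Section D.
Variable R : realType.

Lemma sup_bnd (S : set R) (K : R) : (forall x, S x -> 0 <= x <= K) -> 0 <= K ->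
  0 <= sup S <= K /\ forall x, S x -> x <= sup S.
Proof.
move=> hS K0.
have ub : has_ubound S by exists K => x /hS /andP[].
split; last by move=> x Sx; apply: ub_le_sup.
case: (pselect (exists x, S x)) => [[x Sx]|nS].
  apply/andP; split.
    by apply: le_trans (ub_le_sup ub Sx); case/andP: (hS _ Sx).
  by apply: ge_sup; [exists x | move=> y /hS /andP[]].
rewrite (_ : S = set0) ?sup0 ?lexx ?K0 //.
by apply/seteqP; split => x // Sx; exfalso; apply: nS; exists x.
Qed.

Lemma spd_eig_pos n (T : 'M[R]_n) m : spd T -> eigenvalue T m -> 0 < m.
Proof.
move=> [_ hT] /eigenvalueP [v hv vn0].
have : v^T != 0 by apply: contra vn0 => /eqP /(congr1 trmx); rewrite trmxK trmx0 => ->.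
move/hT; rewrite trmxK hv -scalemxAl mxE.
set s := (v *m v^T) 0 0.
have s0 : 0 <= s by rewrite /s mxE; apply: sumr_ge0 => j _; rewrite mxE -expr2 sqr_ge0.
apply: contraTT; rewrite -!leNgt => hm; exact: mulr_le0_ge0.
Qed.

Definition ratio (w m : R) := ((w - m) ^+ 2 + 1) / ((w + m) ^+ 2 + 1).

Lemma ratio_ge0 w m : 0 <= ratio w m.
Proof. by rewrite /ratio divr_ge0 // addr_ge0 ?sqr_ge0. Qed.

Lemma ratio_lt1 w m : 0 < w -> 0 < m -> Num.sqrt (ratio w m) < 1.
Proof.
move=> w0 m0; rewrite -sqrtr1 ltr_sqrt // /ratio ltr_pdivrMr; last first.
  by rewrite ltr_pwDr ?sqr_ge0.
rewrite mul1r ltrD2r; nra.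
Qed.

Lemma ratio_le1 w m : 0 < w -> 0 < m -> Num.sqrt (ratio w m) <= 1.
Proof. by move=> *; apply/ltW/ratio_lt1. Qed.

Lemma bT_facts n (T : 'M[R]_n) w : spd T -> 0 < w ->
  (exists r : 'rV[R]_n, forall m, eigenvalue T m -> exists j, m = r 0 j) ->
  let b := sup [set Num.sqrt (((w - m) ^+ 2 + 1) / ((w + m) ^+ 2 + 1)) | m in spec T] in
  0 <= b < 1 /\ forall m, eigenvalue T m -> (w - m)^+2 + 1 <= b^+2 * ((w + m)^+2 + 1).
Proof.
move=> hT w0 [r hr] b; rewrite {}/b; set S := (X in sup X).
set F := fun j : 'I_n => if 0 < r 0 j then Num.sqrt (ratio w (r 0 j)) else 0.
set c := \big[Num.max/0]_(j < n) F j.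
have c0 : 0 <= c.
  apply: (big_ind (fun x => 0 <= x)) => //; first by move=> x y hx _; rewrite le_max hx.
  by move=> j _; rewrite /F; case: ifP => _ //; exact: sqrtr_ge0.
have c1 : c < 1.
  apply: (big_ind (fun x => x < 1)) => //; first by move=> x y hx hy; rewrite gt_max hx hy.
  by move=> j _; rewrite /F; case: ifP => h //; exact: ratio_lt1.
have hS : forall x, S x -> 0 <= x <= c.
  move=> _ [m hm <-]; have pos := spd_eig_pos hT hm.
  rewrite sqrtr_ge0 /=; have [j ej] := hr m hm.
  rewrite /c (bigD1 j) //= le_max; apply/orP; left.
  by rewrite /F -ej pos.
have [/andP[b0 bc] hub] := sup_bnd hS c0.
split; first by rewrite b0 (le_lt_trans bc c1).
move=> m hm.
have hb : Num.sqrt (ratio w m) <= sup S by apply: hub; exists m.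
have : ratio w m <= sup S ^+ 2.
  rewrite -(sqr_sqrtr (ratio_ge0 w m)); apply: lerXn2r => //; rewrite nnegrE ?sqrtr_ge0 //.
rewrite /ratio ler_pdivrMr //; by rewrite ltr_pwDr ?sqr_ge0.
Qed.

Lemma diag_eig n (dd : 'rV[R]_n) l : eigenvalue (diag_mx dd) l -> exists j, l = dd 0 j.
Proof.
move=> /eigenvalueP [v hv vn0].
have [j vj] : exists j, v 0 j != 0.
  case: (pickP (fun j => v 0 j != 0)) => [j xj | H]; first by exists j.
  case/eqP: vn0; apply/rowP => k; rewrite [RHS]mxE; apply/eqP; apply/negPn/negP => hk.
  by have := H k; rewrite /= hk.
exists j; move/rowP: hv => /(_ j); rewrite mul_mx_diag !mxE => E.
by apply: (mulIf vj); rewrite -E mulrC.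
Qed.

Lemma diag_eig2 n (dd : 'rV[R]_n) j : eigenvalue (diag_mx dd) (dd 0 j).
Proof.
apply/eigenvalueP; exists 'e_j; first by rewrite -rowE row_diag_mx.
apply/eqP => /matrixP/(_ 0 j); rewrite !mxE !eqxx /= => /eqP; by rewrite oner_eq0.
Qed.

Lemma aD_facts n (dd : 'rV[R]_n) w : 0 < w -> (forall j, dd 0 j <= 0) ->
  let a := sup [set `|(w + l) / (w - l)| | l in spec (diag_mx dd)] in
  0 <= a <= 1 /\ forall j, `|(w + dd 0 j) / (w - dd 0 j)| <= a.
Proof.
move=> w0 hd a; rewrite {}/a; set S := (X in sup X).
have hS : forall x, S x -> 0 <= x <= 1.
  move=> _ [l hl <-]; have [j ->] := diag_eig hl.
  have := hd j; set t := dd 0 j => ht.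
  rewrite normr_ge0 /= ler_norml ler_pdivrMr ?ler_pdivlMr; try lra.
have [ha hub] := sup_bnd hS ler01.
split => // j; apply: hub; exists (dd 0 j) => //; exact: diag_eig2.
Qed.
End D.

Section A.
Variable R : realType.
Local Notation C := (R[i]).
Local Notation "A ^h" := (map_mx Num.conj (trmx A)) (at level 8).

Definition ip n (x y : 'rV[C]_n) : C := (x *m y^h) 0 0.
Definition nrm2 n (x : 'rV[C]_n) : C := ip x x.

Lemma nrm2E n (x : 'rV[C]_n) : nrm2 x = \sum_j `|x 0 j| ^+ 2.
Proof. rewrite /nrm2 /ip !mxE; apply: eq_bigr => j _; rewrite !mxE normCK. done. Qed.

Lemma nrm2_ge0 n (x : 'rV[C]_n) : 0 <= nrm2 x.
Proof. by rewrite nrm2E; apply: sumr_ge0 => j _; rewrite exprn_ge0. Qed.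

Lemma nrm2_eq0 n (x : 'rV[C]_n) : nrm2 x = 0 -> x = 0.
Proof.
rewrite nrm2E => /psumr_eq0P H; apply/rowP => j; rewrite mxE.
have /eqP := H (fun i _ => exprn_ge0 2 (normr_ge0 (x 0 i))) j isT.
by rewrite expf_eq0 /= normr_eq0 => /eqP.
Qed.

Lemma ipDl n (x y z : 'rV[C]_n) : ip (x + y) z = ip x z + ip y z.
Proof. by rewrite /ip mulmxDl mxE. Qed.
Lemma ipDr n (x y z : 'rV[C]_n) : ip x (y + z) = ip x y + ip x z.
Proof. by rewrite /ip linearD /= map_mxD mulmxDr mxE. Qed.
Lemma ipNl n (x y : 'rV[C]_n) : ip (- x) y = - ip x y.
Proof. by rewrite /ip mulNmx mxE. Qed.
Lemma ipNr n (x y : 'rV[C]_n) : ip x (- y) = - ip x y.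
Proof. by rewrite /ip linearN /= map_mxN mulmxN mxE. Qed.

Lemma nrm2D n (x y : 'rV[C]_n) : nrm2 (x + y) = nrm2 x + nrm2 y + ip x y + ip y x.
Proof. rewrite /nrm2 ipDl !ipDr; ring. Qed.
Lemma nrm2N n (x : 'rV[C]_n) : nrm2 (- x) = nrm2 x.
Proof. by rewrite /nrm2 ipNl ipNr opprK. Qed.

Lemma ip_herm n (X : 'M[C]_n) (x y : 'rV[C]_n) : X^h = X ->
  ip (x *m X) y = ip x (y *m X).
Proof. by move=> hX; rewrite /ip trmx_mul map_mxM hX mulmxA. Qed.

Lemma nrm2Z n (a : C) (x : 'rV[C]_n) : nrm2 (a *: x) = `|a| ^+ 2 * nrm2 x.
Proof.
rewrite !nrm2E mulr_sumr; apply: eq_bigr => j _.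
by rewrite mxE normrM exprMn.
Qed.

Lemma nrm2_unitary n m (U : 'M[C]_(n, m)) (x : 'rV[C]_n) : U *m U^h = 1%:M ->
  nrm2 (x *m U) = nrm2 x.
Proof.
by move=> hU; rewrite /nrm2 /ip trmx_mul map_mxM -!mulmxA (mulmxA U) hU mul1mx.
Qed.

Lemma nrm2_diag n (x d : 'rV[C]_n) :
  nrm2 (x *m diag_mx d) = \sum_j `|x 0 j| ^+ 2 * `|d 0 j| ^+ 2.
Proof.
by rewrite nrm2E; apply: eq_bigr => j _; rewrite mul_mx_diag mxE normrM exprMn.
Qed.

Lemma nrm2_row n1 n2 (a : 'rV[C]_n1) (b : 'rV[C]_n2) :
  nrm2 (row_mx a b) = nrm2 a + nrm2 b.
Proof.
by rewrite !nrm2E big_split_ord /=; congr (_ + _); apply: eq_bigr => j _;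
  rewrite ?row_mxEl ?row_mxEr.
Qed.

Lemma nrm2_block n (X : 'M[C]_n) (h1 h2 : 'rV[C]_n) : X^h = X ->
  nrm2 (h1 *m X - h2) + nrm2 (h1 + h2 *m X) =
  (nrm2 (h1 *m X) + nrm2 h1) + (nrm2 (h2 *m X) + nrm2 h2).
Proof.
move=> hX; rewrite !nrm2D nrm2N !ipNl !ipNr (ip_herm _ _ hX) (ip_herm h2 h1 hX).
ring.
Qed.

Local Notation f := (real_complex R).

Lemma cT_herm n (T : 'M[R]_n) : T^T = T -> (map_mx f T)^h = map_mx f T.
Proof.
move=> hT; apply/matrixP => i j; rewrite !mxE.
by rewrite -[in RHS]hT mxE; rewrite conj_Creal //; apply/complex_realP; eexists.
Qed.

Lemma cT_spectral n (T : 'M[R]_n) : T^T = T ->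
  exists2 P : 'M[C]_n, P *m P^h = 1%:M /\ P^h *m P = 1%:M &
  exists r : 'rV[R]_n, [/\ map_mx f T = P^h *m diag_mx (map_mx f r) *m P,
     forall j, eigenvalue T (r 0 j) &
     forall m, eigenvalue T m -> exists j, m = r 0 j].
Proof.
move=> hT; set cT := map_mx f T.
have hsym : cT \is hermsymmx.
  apply: realsym_hermsym.
    apply/is_hermitianmxP; rewrite expr0 scale1r map_mx_id //.
    by rewrite /cT map_trmx hT.
  by apply/mxOverP => i j; apply/complex_realP; exists (T i j); rewrite mxE.
have /orthomx_spectralP hsp := hermitian_normalmx hsym.
have hU := spectral_unitarymx cT.
set P := spectralmx cT in hsp hU; set d := spectral_diag cT in hsp.
have dreal := hermitian_spectral_diag_real hsym.
have PPh : P *m P^h = 1%:M by apply/unitarymxP.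
have PhP : P^h *m P = 1%:M by rewrite -[P^h]mul1mx mulmxKtV.
rewrite invmx_unitary // in hsp.
exists P => //; exists (\row_j complex.Re (d 0 j)).
have dE : map_mx f (\row_j complex.Re (d 0 j)) = d.
  apply/rowP => j; rewrite !mxE; apply: RRe_real.
  by move/mxOverP : dreal => /(_ 0 j).
rewrite dE; split => //; last first.
  move=> m; rewrite -(eigenvalue_map f) -/cT => /eigenvalueP [v hv vn0].
  set x := v *m P^h.
  have hx : x *m diag_mx d = f m *: x.
    rewrite -[x *m diag_mx d]mulmx1 -PPh !mulmxA /x -(mulmxA v) -(mulmxA v) -hsp hv.
    by rewrite scalemxAl.
  have [j xj] : exists j, x 0 j != 0.
    case: (pickP (fun j => x 0 j != 0)) => [j xj | H]; first by exists j.
    case/eqP: vn0; rewrite -[v]mulmx1 -PhP mulmxA -/x.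
    have x0 : x = 0.
      apply/rowP => k; rewrite [RHS]mxE; apply/eqP; apply/negPn/negP => hk; by have := H k; rewrite /= hk.
    by rewrite x0 mul0mx.
  clearbody x; exists j; rewrite mxE.
  move/rowP: hx => /(_ j); rewrite mul_mx_diag !mxE => E.
  have -> : d 0 j = f m by apply: (mulfI xj); rewrite E mulrC.
  by [].
move=> j; rewrite mxE.
rewrite -(eigenvalue_map f) -/cT.
rewrite [X in eigenvalue _ X](_ : _ = d 0 j); last first.
  by apply: RRe_real; move/mxOverP : dreal => /(_ 0 j).
apply/eigenvalueP; exists ('e_j *m P).
  by rewrite hsp !mulmxA -(mulmxA _ P) PPh mulmx1 -(rowE j (diag_mx d)) row_diag_mx scalemxAl.
apply/eqP => /(congr1 (mulmx^~ P^h)); rewrite -mulmxA PPh mulmx1 mul0mx.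
by move/matrixP/(_ 0 j); rewrite !mxE !eqxx /= => /eqP; rewrite oner_eq0.
Qed.

Lemma T_bound n (T : 'M[R]_n) (w b : R) : T^T = T ->
  (forall m, eigenvalue T m -> (w - m)^+2 + 1 <= b^+2 * ((w + m)^+2 + 1)) ->
  forall g : 'rV[C]_n,
  nrm2 (g *m ((f w)%:M - map_mx f T)) + nrm2 g <=
  f (b^+2) * (nrm2 (g *m ((f w)%:M + map_mx f T)) + nrm2 g).
Proof.
move=> hT hb g; have [P [PPh PhP] [r [hTc hr _]]] := cT_spectral hT.
set x := g *m P^h.
have gE : g = x *m P by rewrite /x -mulmxA PhP mulmx1.
have key : forall s : C, g *m ((f w)%:M + s *: map_mx f T) =
    x *m diag_mx (const_mx (f w) + s *: map_mx f r) *m P.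
  move=> s.
  have -> : diag_mx (const_mx (f w) + s *: map_mx f r) =
    (f w)%:M + s *: diag_mx (map_mx f r) by rewrite linearD linearZ /= diag_const_mx.
  rewrite !mulmxDr mulmxDl; congr (_ + _).
    by rewrite !mul_mx_scalar -scalemxAl -gE.
  by rewrite -!scalemxAr -scalemxAl hTc /x !mulmxA.
have nE : forall s, nrm2 (g *m ((f w)%:M + s *: map_mx f T)) =
    \sum_j `|x 0 j|^+2 * `|f w + s * f (r 0 j)|^+2.
  by move=> s; rewrite key nrm2_unitary // nrm2_diag; apply: eq_bigr => j _; rewrite !mxE.
have n0 : nrm2 g = \sum_j `|x 0 j|^+2 by rewrite gE nrm2_unitary // nrm2E.
rewrite (_ : (f w)%:M - map_mx f T = (f w)%:M + (-1) *: map_mx f T); last by rewrite scaleN1r.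
rewrite -[map_mx f T in X in _ <= _ * (nrm2 (_ *m (_ + X)) + _)]scale1r.
rewrite !nE n0 -!big_split mulr_sumr /=; apply: ler_sum => j _.
have hj := hb _ (hr j).
have nf : forall c, `|f c|^+2 = f (c^+2).
  by move=> c; rewrite real_normK ?rmorphXn //; apply/complex_realP; exists c.
rewrite mulN1r mul1r -rmorphB -rmorphD !nf.
set a := `|x 0 j| ^+ 2.
have a0 : 0 <= a by rewrite exprn_ge0.
rewrite (_ : a * f ((w - r 0 j) ^+ 2) + a = a * f ((w - r 0 j) ^+ 2 + 1)); last first.
  by rewrite rmorphD rmorph1 mulrDr mulr1.
rewrite (_ : f (b ^+ 2) * (a * f ((w + r 0 j) ^+ 2) + a) =
   a * f (b ^+ 2 * ((w + r 0 j) ^+ 2 + 1))); last first.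
  rewrite (rmorphM f (b ^+ 2)) (rmorphD f _ 1) (rmorph1 f); ring.
by apply: ler_wpM2l => //; rewrite lecR.
Qed.

Lemma herm_shift n (T : 'M[R]_n) (w s : R) : T^T = T ->
  ((f w)%:M + f s *: map_mx f T)^h = (f w)%:M + f s *: map_mx f T.
Proof.
move=> hT; rewrite linearD /= linearZ /= map_mxD map_mxZ cT_herm //.
rewrite tr_scalar_mx map_scalar_mx /= !conj_Creal //; apply/complex_realP; eexists; reflexivity.
Qed.

Lemma H_bound n (T : 'M[R]_n) (w b : R) : T^T = T ->
  (forall m, eigenvalue T m -> (w - m)^+2 + 1 <= b^+2 * ((w + m)^+2 + 1)) ->
  forall h : 'rV[C]_(n + n),
  nrm2 (h *m ((f w)%:M - map_mx f (Hmx T))) <=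
  f (b^+2) * nrm2 (h *m ((f w)%:M + map_mx f (Hmx T))).
Proof.
move=> hT hb h; rewrite -(hsubmxK h); set h1 := lsubmx h; set h2 := rsubmx h.
rewrite /Hmx map_block_mx map_mxN map_scalar_mx rmorph1 scalar_mx_block.
rewrite opp_block_mx !add_block_mx !mul_row_block !nrm2_row.
rewrite sub0r opprK add0r !mulmxN !mulmx1.
have hX : ((f w)%:M - map_mx f T)^h = (f w)%:M - map_mx f T.
  by have := herm_shift w (-1) hT; rewrite rmorphN1 scaleN1r.
have hY : ((f w)%:M + map_mx f T)^h = (f w)%:M + map_mx f T.
  by have := herm_shift w 1 hT; rewrite rmorph1 scale1r.
rewrite nrm2_block //.
rewrite -[h2 in X in _ <= _ * (nrm2 (_ + X) + _)]opprK.
rewrite (_ : - h1 + h2 *m ((f w)%:M + map_mx f T) =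
   - (h1 + (- h2) *m ((f w)%:M + map_mx f T))); last by rewrite opprD mulNmx opprK.
rewrite nrm2N nrm2_block // mulNmx !nrm2N mulrDr.
by apply: lerD; apply: T_bound.
Qed.

Lemma H_lower n (T : 'M[R]_n) (w : R) : T^T = T ->
  forall h : 'rV[C]_(n + n),
  nrm2 h <= nrm2 (h *m ((f w)%:M + map_mx f (Hmx T))).
Proof.
move=> hT h; rewrite -(hsubmxK h); set h1 := lsubmx h; set h2 := rsubmx h.
rewrite /Hmx map_block_mx map_mxN map_scalar_mx rmorph1 scalar_mx_block.
rewrite !add_block_mx !mul_row_block !nrm2_row.
rewrite !add0r ?mulmxN !mulmx1.
have hY : ((f w)%:M + map_mx f T)^h = (f w)%:M + map_mx f T.
  by have := herm_shift w 1 hT; rewrite rmorph1 scale1r.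
rewrite -[h2 in X in _ <= nrm2 (_ + X) + _]opprK.
rewrite (_ : - h1 + h2 *m ((f w)%:M + map_mx f T) =
   - (h1 + (- h2) *m ((f w)%:M + map_mx f T))); last by rewrite opprD mulNmx opprK.
rewrite nrm2N nrm2_block // mulNmx !nrm2N.
by apply: lerD; rewrite lerDr nrm2_ge0.
Qed.
Lemma normf2 (c : R) : `|f c|^+2 = f (c^+2).
Proof. by rewrite real_normK ?rmorphXn //; apply/complex_realP; exists c. Qed.
End A.

Lemma row_split R n (dd : 'rV[R]_n) k : exists j, row_mx dd dd 0 k = dd 0 j.
Proof.
by rewrite -(splitK k); case: split => j /=; exists j; rewrite ?row_mxEl ?row_mxEr.
Qed.

Theorem theorem3 (R : realType) (M : nat) (T D : 'M[R]_M) (w : R) :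
  spd T -> is_diag_mx D -> (forall i, D i i <= 0) -> 0 < w ->
  (forall z : R[i],
     eigenvalue (map_mx (@toC R) (invmx (Fmx w T D) *m Rmx T D)) z ->
     `|z - 1| <= ((sigma w T D)%:C)%C)
  /\ sigma w T D < 1.
Proof.
move=> hT /diag_mxP [dd ->] hD w0.
have hd : forall j, dd 0 j <= 0 by move=> j; have := hD j; rewrite mxE eqxx mulr1n.
have Tsym : T^T = T by case: hT.
have [P [PPh PhP] [r [hTc hr hr']]] := cT_spectral Tsym.
have [/andP[b0 b1] hb] := bT_facts hT w0 (ex_intro _ r hr').
have [/andP[a0 a1] ha] := aD_facts w0 hd.
rewrite /sigma.
set a := sup _ in a0 a1 ha *.
set b := sup _ in b0 b1 hb *.
split; last by nra.
move=> z; rewrite (_ : @toC R = real_complex R) // map_mxM map_invmx.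
set f := real_complex R.
set Bc := map_mx f (Bmx (diag_mx dd)).
set Hc := map_mx f (Hmx T).
set WB := (f w)%:M + Bc; set WH := (f w)%:M + Hc.
set MB := (f w)%:M - Bc; set MH := (f w)%:M - Hc.
have fw0 : f w != 0 by rewrite fmorph_eq0 gt_eqF.
have c0 : f (2 * w) != 0 by rewrite fmorph_eq0 mulf_neq0 ?gt_eqF.
have hF : map_mx f (Fmx w T (diag_mx dd)) = (f (2 * w))^-1 *: (WB *m WH).
  by rewrite /Fmx map_mxZ map_mxM !map_mxD !map_scalar_mx fmorphV.
have hR : map_mx f (Rmx T (diag_mx dd)) = Bc + Hc.
  rewrite /Bc /Hc -map_mxD; congr map_mx.
  by rewrite /Rmx /Bmx /Hmx add_block_mx sub0r add0r (addrC (- _)).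
have hG : map_mx f (Fmx w T (diag_mx dd)) - map_mx f (Rmx T (diag_mx dd)) =
    (f (2 * w))^-1 *: (MB *m MH).
  have f2 : f (2 * w) = 2 * f w by rewrite /f rmorphM rmorph_nat.
  by rewrite hF hR f2 FR_id // pnatr_eq0.
set Fc := map_mx f (Fmx w T (diag_mx dd)) in hF hG.
set Rc := map_mx f (Rmx T (diag_mx dd)) in hR hG.
move=> /eigenvalueP [v hv vn0].
have {}hv : v *m (invmx Fc *m Rc) = z *: v := hv.
set ee := map_mx f (row_mx dd dd).
have hB : Bc = - diag_mx ee.
  rewrite /Bc /Bmx (_ : block_mx (- diag_mx dd) 0 0 (- diag_mx dd) = - diag_mx (row_mx dd dd)).
    by rewrite map_mxN map_diag_mx.
  by rewrite diag_mx_row opp_block_mx !oppr0.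
have WBE : WB = diag_mx (const_mx (f w) - ee) by rewrite /WB hB linearB /= diag_const_mx.
have MBE : MB = diag_mx (const_mx (f w) + ee) by rewrite /MB hB opprK linearD /= diag_const_mx.
have eeE : forall k, exists j, (const_mx (f w) - ee) 0 k = f (w - dd 0 j) /\
    (const_mx (f w) + ee) 0 k = f (w + dd 0 j).
  move=> k; have [j hj] := row_split dd k; exists j; move: hj; rewrite !mxE => ->.
  by rewrite /f rmorphB rmorphD.
have WBu : WB \in unitmx.
  rewrite WBE unitmxE det_diag unitfE; apply/prodf_neq0 => k _.
  have [j [-> _]] := eeE k; rewrite fmorph_eq0 subr_eq0.
  by apply/eqP => E; have := hd j; rewrite -E leNgt w0.
have WHu : WH \in unitmx.
  apply: unit_of_ker => x hx; apply: nrm2_eq0; apply/le_anti.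
  rewrite nrm2_ge0 andbT; have := H_lower w Tsym x; rewrite -/Hc -/WH hx.
  have n0 : nrm2 (0 : 'rV[R[i]]_(M + M)) = 0 by rewrite /nrm2 /ip mul0mx mxE.
  by rewrite n0.
have Fu : Fc \in unitmx by rewrite hF unitmxZ ?unitfE ?invr_eq0 // unitmx_mul WBu WHu.
set u := v *m invmx Fc.
have vE : v = u *m Fc by rewrite /u mulmxKV.
have hu : u *m Rc = z *: (u *m Fc) by rewrite -vE /u -mulmxA hv.
set lam := 1 - z.
have h1 : u *m (MB *m MH) = lam *: (u *m (WB *m WH)).
  have cn0 : (f (2 * w))^-1 != 0 by rewrite invr_eq0.
  apply: (scalerI cn0); rewrite scalemxAr -hG mulmxBr hu scalerA mulrC -scalerA.
  by rewrite [in RHS]scalemxAr -hF /lam scalerBl scale1r.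
rewrite !mulmxA in h1.
set y := u *m WB in h1; set g := u *m MB in h1.
set h := g *m invmx WH.
have gE : g = h *m WH by rewrite /h mulmxKV.
have comm : MH *m WH = WH *m MH.
  have MHE : MH = (f w)%:M + (f w)%:M - WH by rewrite /MH /WH addrKA.
  have sc : forall A : 'M[R[i]]_(M + M), ((f w)%:M + (f w)%:M) *m A = A *m ((f w)%:M + (f w)%:M).
    by move=> A; rewrite mulmxDl mulmxDr !mul_scalar_mx !mul_mx_scalar.
  by rewrite MHE mulmxBl mulmxBr sc.
have hl : lam *: y = h *m MH.
  apply: (row_free_inj (A := WH)); first by rewrite row_free_unit.
  rewrite -mulmxA comm mulmxA -gE.
  by rewrite h1 -scalemxAl.
have un0 : u != 0.
  by apply/eqP => u0; move/eqP: vn0; apply; rewrite vE u0 mul0mx.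
have yn0 : y != 0.
  apply: contraNneq un0 => y0; by rewrite -[u]mulmx1 -(mulmxV WBu) mulmxA -/y y0 mul0mx.
have e2 : nrm2 (h *m MH) <= f (b^+2) * nrm2 (h *m WH) := H_bound Tsym hb h.
have e3 : nrm2 g <= f (a^+2) * nrm2 y.
  rewrite /g /y MBE WBE !nrm2_diag mulr_sumr; apply: ler_sum => k _.
  have [j [E1 E2]] := eeE k; rewrite E1 E2 !normf2 mulrCA.
  apply: ler_wpM2l; first by rewrite exprn_ge0.
  rewrite /f -rmorphM lecR.
  have hdj := hd j; have wd : 0 < w - dd 0 j by rewrite subr_gt0 (le_lt_trans hdj w0).
  have := ha j; rewrite normrM normfV (gtr0_norm wd) ler_pdivrMr // => h3.
  rewrite -(real_normK (num_real (w + dd 0 j))) -exprMn.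
  apply: lerXn2r; rewrite ?nnegrE ?normr_ge0 //.
  by rewrite mulr_ge0 // ltW.
have ny : 0 < nrm2 y by rewrite lt_def nrm2_ge0 andbT; apply: contra yn0 => /eqP/nrm2_eq0 ->.
have : `|lam|^+2 * nrm2 y <= f ((a * b)^+2) * nrm2 y.
  have fab : f (a ^+ 2 * b ^+ 2) = f (a ^+ 2) * f (b ^+ 2) by rewrite /f rmorphM.
  rewrite -nrm2Z hl; apply: (le_trans e2); rewrite -gE exprMn fab (mulrC (f (a ^+ 2))) -mulrA.
  by apply: ler_wpM2l => //; rewrite /f -normf2 exprn_ge0.
rewrite ler_pM2r // /f -normf2 ler_sqr ?nnegrE ?normr_ge0 //.
rewrite (ger0_norm (x := f (a * b))); last by rewrite lecR mulr_ge0.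
by rewrite distrC.
Qed.
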